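(* Let $T(t)$ and $S(t)$ be strongly continuous semigroups on Banach spaces $X$ and $Y$, respectively, and assume that $T(t)$ satisfies the recurrent hypercyclicity criterion. Let $\alpha$ be a uniform crossnorm on the algebraic tensor product $X\otimes Y$, and let $X\tilde{\otimes}_\alpha Y$ denote the completion of $(X\otimes Y,\alpha)$. (a) If $S(t)$ satisfies the hypercyclicity criterion, then the semigroup $T(t)\otimes S(t)$ on $X\tilde{\otimes}_\alpha Y$ satisfies the hypercyclicity criterion. (b) If $S(t)$ satisfies the recurrent hypercyclicity criterion, then the semigroup $T(t)\otimes S(t)$ on $X\tilde{\otimes}_\alpha Y$ satisfies the recurrent hypercyclicity criterion.
   Context: A uniform crossnorm on $X\otimes Y$ is a reasonable crossnorm $\alpha$ (in particular $\alpha(x\otimes y)=\|x\|_X\|y\|_Y$ for $x\in X,y\in Y$) such that for all bounded operators $A$ on $X$ and $B$ on $Y$ the operator $A\otimes B$ is bounded on $(X\otimes Y,\alpha)$ with norm at most $\|A\|\|B\|$. The operator $T(t)\otimes S(t)$ is defined on elementary tensors by $x\otimes y\mapsto T(t)x\otimes S(t)y$ and extended uniquely by continuity to $X\tilde{\otimes}_\alpha Y$; this gives a strongly continuous semigroup. A strongly continuous semigroup $R(t)$ on a (separable) Banach space $Z$ satisfies the hypercyclicity criterion if for all non-empty open subsets $U,V,W\subset Z$ with $0\in W$ there exists $t>0$ with $R(t)U\cap W\neq\emptyset$ and $R(t)W\cap V\neq\emptyset$. It satisfies the recurrent hypercyclicity criterion if for all non-empty open subsets $U,V,W\subset Z$ with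 $0\in W$ there exists a constant $L\geq 0$ such that every interval $[t,t+L]$ ($t\ge 0$) contains some $s$ with $R(s)U\cap W\neq\emptyset$ and $R(s)W\cap V\neq\emptyset$. *)

(* Defs.v *)
From mathcomp Require Import all_boot all_order all_algebra all_classical all_reals all_analysis.
From mathcomp Require Export complex.
Import numFieldNormedType.Exports.
Set Implicit Arguments. Unset Strict Implicit. Unset Printing Implicit Defensive.
Import Order.TTheory GRing.Theory Num.Theory.
Local Open Scope classical_set_scope.
Local Open Scope ring_scope.

Definition is_linear (K : numFieldType) (U V : normedModType K) (f : U -> V) :=
  forall (a : K) (u v : U), f (a *: u + v) = a *: f u + f v.

Definition bounded_op (K : numFieldType) (U V : normedModType K) (f : U -> V) :=
  is_linear f /\ continuous f.

Definition op_norm_le (K : numFieldType) (U V : normedModType K) (f : U -> V) (c : K) :=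
  forall u, `|f u| <= c * `|u|.

(* strongly continuous (C_0) semigroup, indexed by t >= 0 (values at t < 0 are irrelevant) *)
Definition C0_semigroup (R : realType) (X : normedModType R[i]) (T : R -> X -> X) :=
  [/\ (forall t, 0 <= t -> bounded_op (T t)),
      (forall x, T 0 x = x),
      (forall s t x, 0 <= s -> 0 <= t -> T (s + t) x = T s (T t x)) &
      (forall x, {within [set t : R | 0 <= t], continuous (fun t => T t x)})].

Definition hc_criterion (R : realType) (Z : normedModType R[i]) (Rs : R -> Z -> Z) :=
  forall U V W : set Z, open U -> open V -> open W ->
    U !=set0 -> V !=set0 -> W 0 ->
    exists t : R, 0 < t /\ ((Rs t @` U) `&` W) !=set0 /\ ((Rs t @` W) `&` V) !=set0.

Definition recurrent_hc_criterion (R : realType) (Z : normedModType R[i]) (Rs : R -> Z -> Z) :=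
  forall U V W : set Z, open U -> open V -> open W ->
    U !=set0 -> V !=set0 -> W 0 ->
    exists L : R, 0 <= L /\ forall t : R, 0 <= t ->
      exists s : R, t <= s <= t + L /\
        ((Rs s @` U) `&` W) !=set0 /\ ((Rs s @` W) `&` V) !=set0.

Definition tensor_span (K : numFieldType) (X Y Z : normedModType K) (tens : X -> Y -> Z) : set Z :=
  [set z | exists (n : nat) (xs : 'I_n -> X) (ys : 'I_n -> Y),
             z = \sum_(k < n) tens (xs k) (ys k)].

(* Z, together with tens : X -> Y -> Z (x,y) |-> x (x) y, is the completion
   X ~(x)_alpha Y of the algebraic tensor product X (x) Y (identified with
   tensor_span tens) with respect to a uniform (reasonable) crossnorm alpha,
   alpha being the restriction of the norm of Z. *)
Definition uniform_crossnorm_completion (R : realType) (X Y Z : normedModType R[i])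
    (tens : X -> Y -> Z) :=
  [/\
      (forall (a : R[i]) x x' y, tens (a *: x + x') y = a *: tens x y + tens x' y) /\
      (forall (a : R[i]) x y y', tens x (a *: y + y') = a *: tens x y + tens x y'),
      (forall x y, `|tens x y| = `|x| * `|y|),
      (* reasonable: f (x) g is bounded with dual norm <= |f| |g| *)
      (forall (f : X -> R[i]^o) (g : Y -> R[i]^o), bounded_op f -> bounded_op g ->
         exists phi : Z -> R[i]^o, bounded_op phi /\
           (forall x y, phi (tens x y) = f x * g y) /\
           (forall a b : R[i], 0 <= a -> 0 <= b -> op_norm_le f a -> op_norm_le g b ->
              op_norm_le phi (a * b))),
      (* uniform: A (x) B is bounded with norm <= |A| |B| *)
      (forall (A : X -> X) (B : Y -> Y), bounded_op A -> bounded_op B ->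
         exists C : Z -> Z, bounded_op C /\
           (forall x y, C (tens x y) = tens (A x) (B y)) /\
           (forall a b : R[i], 0 <= a -> 0 <= b -> op_norm_le A a -> op_norm_le B b ->
              op_norm_le C (a * b))) &
      closure (tensor_span tens) = setT].

(* Main.v *)
Require Import Defs.
From mathcomp Require Import all_boot all_algebra all_classical all_reals all_analysis.
From mathcomp Require Import complex.
From mathcomp Require Import all_order.
From mathcomp Require Import lra.
Import numFieldNormedType.Exports.
Import Order.TTheory GRing.Theory Num.Theory.
Local Open Scope classical_set_scope.
Local Open Scope ring_scope.
Local Open Scope complex_scope.
Set Implicit Arguments. Unset Strict Implicit. Unset Printing Implicit Defensive.


Section P0.
Variable R : realType.
Implicit Types (V : normedModType R[i]).

Definition nr {V} (x : V) : R := complex.Re `|x|.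

Lemma nrE V (x : V) : `|x| = (nr x)%:C.
Proof. by rewrite /nr RRe_real // normr_real. Qed.

Lemma nr_ge0 V (x : V) : 0 <= nr x.
Proof. by rewrite -ler0c -nrE. Qed.

Lemma nrD V (x y : V) : nr (x + y) <= nr x + nr y.
Proof. by rewrite -lecR rmorphD /= -!nrE ler_normD. Qed.

Lemma nrN V (x : V) : nr (- x) = nr x.
Proof. by rewrite /nr normrN. Qed.

Lemma nr0 V : nr (0 : V) = 0.
Proof. by rewrite /nr normr0. Qed.

Lemma nr_eq0 V (x : V) : nr x = 0 -> x = 0.
Proof. by move=> h; apply/normr0_eq0; rewrite nrE h. Qed.

Lemma nrB V (x y : V) : nr (x - y) = nr (y - x).
Proof. by rewrite /nr distrC. Qed.

Lemma normcR (c : R) : `|c%:C| = `|c|%:C.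
Proof.
case: (lerP 0 c) => h.
  by rewrite !ger0_norm // ler0c.
by rewrite !ltr0_norm ?rmorphN // ltcR.
Qed.

Lemma ltr0c (k : R) : (0 < k%:C) = (0 < k).
Proof. by rewrite -(ltcR 0). Qed.

Lemma nrZ V (c : R) (x : V) : nr (c%:C *: x) = `|c| * nr x.
Proof.
by apply: complexI; rewrite -nrE normrZ nrE rmorphM /= normcR.
Qed.

Lemma ball_nr V (x y : V) (e : R) : ball x e%:C y <-> nr (x - y) < e.
Proof. by rewrite -ball_normE /= nrE ltcR. Qed.

Lemma open_nr V (A : set V) : open A -> forall x, A x ->
  exists r : R, 0 < r /\ forall y, nr (x - y) < r -> A y.
Proof.
move=> oA x Ax.
have : nbhs x A by apply: open_nbhs_nbhs; split.
move=> /nbhs_ballP [e e0 eA].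
have er : e \is Num.real by apply: gtr0_real.
exists (complex.Re e); split; first by rewrite -ltr0c RRe_real.
by move=> y hy; apply: eA; rewrite -(RRe_real er) ball_nr.
Qed.

Lemma nr_open V (A : set V) : (forall x, A x ->
  exists r : R, 0 < r /\ forall y, nr (x - y) < r -> A y) -> open A.
Proof.
move=> h; rewrite openE => x /h [r [r0 hr]].
rewrite /interior; apply/nbhs_ballP; exists r%:C.
  by rewrite /= ltr0c.
by move=> y /ball_nr; apply: hr.
Qed.

End P0.

Section P1.
Variable R : realType.
Implicit Types (V W : normedModType R[i]).

Lemma lin_add V W (f : V -> W) : bounded_op f -> forall x y, f (x + y) = f x + f y.
Proof. by move=> [hl _] x y; have := hl 1 x y; rewrite !scale1r. Qed.

Lemma lin0 V W (f : V -> W) : bounded_op f -> f 0 = 0.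
Proof.
move=> hf; apply/(addrI (f 0)); by rewrite -(lin_add hf) !addr0.
Qed.

Lemma linZ V W (f : V -> W) : bounded_op f -> forall a x, f (a *: x) = a *: f x.
Proof. by move=> hf a x; rewrite -[a *: x]addr0 hf.1 (lin0 hf) addr0. Qed.

Lemma linN V W (f : V -> W) : bounded_op f -> forall x, f (- x) = - f x.
Proof. by move=> hf x; rewrite -scaleN1r (linZ hf) scaleN1r. Qed.

Lemma linB V W (f : V -> W) : bounded_op f -> forall x y, f (x - y) = f x - f y.
Proof. by move=> hf x y; rewrite (lin_add hf) (linN hf). Qed.

Lemma lin_sum V W (f : V -> W) : bounded_op f -> forall n (g : nat -> V),
  f (\sum_(k < n) g k) = \sum_(k < n) f (g k).
Proof.
move=> hf; elim=> [|n IH] g; first by rewrite !big_ord0 (lin0 hf).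
by rewrite !big_ord_recr /= (lin_add hf) IH.
Qed.

Lemma nr_sum V n (g : nat -> V) : nr (\sum_(k < n) g k) <= \sum_(k < n) nr (g k).
Proof.
elim: n => [|n IH]; first by rewrite !big_ord0 nr0.
rewrite !big_ord_recr /=; apply: (le_trans (nrD _ _)); exact: lerD.
Qed.

Lemma semi_comm V (T : R -> V -> V) : C0_semigroup T ->
  forall s t x, 0 <= s -> 0 <= t -> T s (T t x) = T t (T s x).
Proof. by move=> [_ _ hs _] s t x s0 t0; rewrite -hs // addrC hs. Qed.

Lemma semi_op V (T : R -> V -> V) : C0_semigroup T -> forall t, 0 <= t -> bounded_op (T t).
Proof. by case. Qed.

Lemma semi0 V (T : R -> V -> V) : C0_semigroup T -> forall t, 0 <= t -> T t 0 = 0.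
Proof. by move=> hT t t0; apply: lin0; apply: semi_op. Qed.

End P1.

Section P2.
Variable R : realType.
Variables (X Y Z : normedModType R[i]) (tens : X -> Y -> Z).
Hypothesis htens : uniform_crossnorm_completion tens.

Lemma tens_bil : (forall (a : R[i]) x x' y, tens (a *: x + x') y = a *: tens x y + tens x' y) /\
      (forall (a : R[i]) x y y', tens x (a *: y + y') = a *: tens x y + tens x y').
Proof. by case: htens. Qed.

Lemma nr_tens x y : nr (tens x y) = nr x * nr y.
Proof. by apply: complexI; case: htens => _ h _ _ _; rewrite -nrE h !nrE rmorphM. Qed.

Lemma tens0l y : tens 0 y = 0.
Proof. by apply: nr_eq0; rewrite nr_tens nr0 mul0r. Qed.

Lemma tens0r x : tens x 0 = 0.
Proof. by apply: nr_eq0; rewrite nr_tens nr0 mulr0. Qed.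

Lemma tensBl p x q : tens (p - x) q = tens p q - tens x q.
Proof. by rewrite addrC -scaleN1r tens_bil.1 scaleN1r addrC. Qed.

Lemma tensBr x q y : tens x (q - y) = tens x q - tens x y.
Proof. by rewrite addrC -scaleN1r tens_bil.2 scaleN1r addrC. Qed.

Lemma tens_est p q x y :
  nr (tens p q - tens x y) <= nr (p - x) * nr q + nr x * nr (q - y).
Proof.
have -> : tens p q - tens x y = tens (p - x) q + tens x (q - y).
  by rewrite tensBl tensBr addrA subrK.
by apply: (le_trans (nrD _ _)); rewrite !nr_tens.
Qed.

Lemma sumcont n (x : nat -> X) (y : nat -> Y) (e : R) : 0 < e ->
  exists d : R, 0 < d /\ forall p q, (forall k, (k < n)%N -> nr (p k - x k) < d /\ nr (q k - y k) < d) ->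
  nr (\sum_(k < n) tens (p k) (q k) - \sum_(k < n) tens (x k) (y k)) < e.
Proof.
move=> e0.
pose K := \sum_(k < n) (nr (x k) + nr (y k) + 1).
have K0 : 0 <= K by apply: sumr_ge0 => k _; rewrite addr_ge0 ?ler01 ?addr_ge0 ?nr_ge0.
pose d := Num.min 1 (e / (K + 1)).
have K1 : 0 < K + 1 by lra.
have d0 : 0 < d by rewrite lt_min ltr01 divr_gt0.
have d1 : d <= 1 by rewrite ge_min lexx.
have dK : d * (K + 1) <= e.
  by rewrite -ler_pdivlMr // ge_min lexx orbT.
exists d; split => // p q hpq.
rewrite -sumrB; apply: (le_lt_trans (nr_sum n (fun k => tens (p k) (q k) - tens (x k) (y k)))).
suff hs : \sum_(k < n) nr (tens (p k) (q k) - tens (x k) (y k)) <= d * K by nra.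
rewrite /K mulr_sumr; apply: ler_sum => k _.
have [h1 h2] := hpq k (ltn_ord k).
apply: (le_trans (tens_est _ _ _ _)).
have hq : nr (q k) <= nr (y k) + nr (q k - y k).
  by rewrite -[X in nr X](subrK (y k)) addrC; apply: nrD.
have := nr_ge0 (p k - x k); have := nr_ge0 (q k - y k); have := nr_ge0 (x k);
have := nr_ge0 (y k); have := nr_ge0 (q k).
nra.
Qed.

End P2.

Section P3.
Variable R : realType.
Implicit Types (V W : normedModType R[i]).

Lemma nbhs_nr V (A : set V) x : nbhs x A ->
  exists r : R, 0 < r /\ forall y, nr (x - y) < r -> A y.
Proof.
move=> /nbhs_ballP [e e0 eA].
have er : e \is Num.real by apply: gtr0_real.
exists (complex.Re e); split; first by rewrite -ltr0c RRe_real.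
by move=> y hy; apply: eA; rewrite -(RRe_real er) ball_nr.
Qed.

Lemma cont_nr V W (f : V -> W) p : {for p, continuous f} -> forall e : R, 0 < e ->
  exists d : R, 0 < d /\ forall p', nr (p - p') < d -> nr (f p - f p') < e.
Proof.
move=> hf e e0.
have : nbhs (f p) (ball (f p) e%:C) by apply: nbhsx_ballx; rewrite ltr0c.
move=> /hf /nbhs_nr [d [d0 hd]]; exists d; split => // p' /hd.
by rewrite /= ball_nr.
Qed.

Lemma open_nr_ball V (z : V) (r : R) : open [set y | nr (z - y) < r].
Proof.
apply: nr_open => y /= hy; exists (r - nr (z - y)); split; first lra.
move=> y' hy'; have := nrD (z - y) (y - y'); rewrite addrA subrK; lra.
Qed.

Lemma open_single V W (f : V -> W) (z : W) (d : R) : continuous f ->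
  open [set p | nr (f p - z) < d].
Proof.
move=> hf; apply: nr_open => p /= hp.
have dp : 0 < d - nr (f p - z) by lra.
have [de [de0 hde]] := cont_nr (hf p) dp.
exists de; split => // p' /hde h.
have := nrD (f p' - f p) (f p - z); rewrite addrA subrK nrB; lra.
Qed.

Lemma openfin V W (f : nat -> V -> W) (z : nat -> W) (d : R) n :
  (forall k, continuous (f k)) ->
  open [set p | forall k, (k < n)%N -> nr (f k p - z k) < d].
Proof.
move=> hf; elim: n => [|n IH].
  have -> : [set p | forall k, (k < 0)%N -> nr (f k p - z k) < d] = setT.
    by apply/seteqP; split => p //= _ k.
  exact: openT.
have -> : [set p | forall k, (k < n.+1)%N -> nr (f k p - z k) < d] =
   [set p | forall k, (k < n)%N -> nr (f k p - z k) < d] `&` [set p | nr (f n p - z n) < d].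
  apply/seteqP; split => p /=.
    by move=> h; split => [k kn|]; apply: h => //; apply: ltnW.
  by move=> [h1 h2] k; rewrite ltnS leq_eqVlt => /orP [/eqP -> //|]; apply: h1.
by apply: openI => //; apply: open_single.
Qed.

Variables (V : normedModType R[i]) (T : R -> V -> V).
Hypothesis hT : C0_semigroup T.
Hypothesis hc : hc_criterion T.

Lemma Tcont t : 0 <= t -> continuous (T t).
Proof. by move=> t0; case: (semi_op hT t0). Qed.

Lemma trans (A B : set V) : open A -> open B -> A !=set0 -> B !=set0 ->
  exists t, 0 < t /\ exists a, A a /\ B (T t a).
Proof.
move=> oA oB [a0 Aa0] [b0 Bb0].
have [r1 [r10 h1]] := open_nr oA Aa0.
have [r2 [r20 h2]] := open_nr oB Bb0.
pose r := Num.min r1 r2.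
have r0 : 0 < r by rewrite lt_min r10.
have rr1 : r <= r1 by rewrite ge_min lexx.
have rr2 : r <= r2 by rewrite ge_min lexx orbT.
have := hc (open_nr_ball a0 (r / 2)) (open_nr_ball b0 (r / 2)) (open_nr_ball 0 (r / 2)).
case.
- by exists a0 => /=; rewrite subrr nr0; lra.
- by exists b0 => /=; rewrite subrr nr0; lra.
- by rewrite /= subrr nr0; lra.
move=> t [t0 [[_ [[u /= hu <-] hTu]] [_ [[w /= hw <-] hTw]]]].
exists t; split => //; exists (u + w); split.
  apply: h1; rewrite opprD addrA; have := nrD (a0 - u) (- w); rewrite nrN.
  by rewrite sub0r nrN in hw; lra.
apply: h2; have ht0 : 0 <= t by lra.
rewrite (lin_add (semi_op hT ht0)).
have -> : b0 - (T t u + T t w) = (b0 - T t w) + (- T t u) by rewrite opprD addrA addrAC.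
have := nrD (b0 - T t w) (- T t u); rewrite nrN.
by rewrite sub0r nrN in hTu; lra.
Qed.

Lemma orbit n (x : nat -> V) (d : R) : 0 < d ->
  exists a (j : nat -> R), (forall k, 0 <= j k) /\
    forall k, (k < n)%N -> nr (T (j k) a - x k) < d.
Proof.
move=> d0; elim: n => [|n [a [j [j0 hj]]]].
  by exists 0, (fun _ => 0); split.
have oA := @openfin _ _ (fun k => T (j k)) x d n (fun k => Tcont (j0 k)).
have [||t [t0 [a' [Aa' Ba']]]] := trans oA (open_nr_ball (x n) d).
- by exists a.
- by exists (x n); rewrite /= subrr nr0.
exists a', (fun k => if k == n then t else j k); split.
  by move=> k; case: ifP => _ //; lra.
move=> k; rewrite ltnS leq_eqVlt => /orP [/eqP ->|kn].
  by rewrite eqxx nrB.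
by rewrite ifN ?Aa' // neq_ltn kn.
Qed.
End P3.

Definition Mi (R : realType) (V : normedModType R[i]) (T : R -> V -> V) (A W C : set V) (s : R) :=
  ((T s @` A) `&` W) !=set0 /\ ((T s @` W) `&` C) !=set0.

Section P4.
Variable R : realType.
Variables (X Y Z : normedModType R[i]) (T : R -> X -> X) (S : R -> Y -> Y)
  (tens : X -> Y -> Z) (TS : R -> Z -> Z).
Hypotheses (hT : C0_semigroup T) (hS : C0_semigroup S) (hcT : hc_criterion T)
  (hcS : hc_criterion S) (htens : uniform_crossnorm_completion tens)
  (hTS : forall t, 0 <= t -> bounded_op (TS t) /\
     forall x y, TS t (tens x y) = tens (T t x) (S t y)).

Lemma span_near (U : set Z) : open U -> U !=set0 ->
  exists n (xn : nat -> X) (yn : nat -> Y), U (\sum_(k < n) tens (xn k) (yn k)).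
Proof.
move=> oU [u0 Uu0].
have : closure (tensor_span tens) u0 by case: htens => _ _ _ _ ->.
move=> /(_ U (open_nbhs_nbhs (conj oU Uu0))) [z [[n [xs [ys ->]]] Uz]].
exists n, (fun k => if insub k is Some i then xs i else 0),
  (fun k => if insub k is Some i then ys i else 0).
by rewrite (eq_bigr (fun i : 'I_n => tens (xs i) (ys i))) // => i _; rewrite valK.
Qed.


Lemma sum00 n : \sum_(k < n) tens ((fun _ => 0) k) ((fun _ => 0) k) = 0 :> Z.
Proof. by rewrite big1 // => k _; rewrite tens0l. Qed.

Lemma TS_sum s n (p : nat -> X) (q : nat -> Y) (j i : nat -> R) : 0 <= s ->
  (forall k, 0 <= j k) -> (forall k, 0 <= i k) ->
  TS s (\sum_(k < n) tens (T (j k) (p k)) (S (i k) (q k))) =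
  \sum_(k < n) tens (T (j k) (T s (p k))) (S (i k) (S s (q k))).
Proof.
move=> s0 j0 i0; rewrite (lin_sum (hTS s0).1 n (fun k => tens (T (j k) (p k)) (S (i k) (q k)))).
apply: eq_bigr => k _.
by rewrite (hTS s0).2 (semi_comm hT) // (semi_comm hS).
Qed.

Lemma zlemma (U V W : set Z) : open U -> open V -> open W -> U !=set0 -> V !=set0 -> W 0 ->
  exists (A C WX : set X) (B D WY : set Y),
  (open A /\ open C /\ open WX /\ A !=set0 /\ C !=set0 /\ WX 0) /\
  (open B /\ open D /\ open WY /\ B !=set0 /\ D !=set0 /\ WY 0) /\
  forall s, 0 <= s -> Mi T A WX C s -> Mi S B WY D s -> Mi TS U W V s.
Proof.
move=> oU oV oW U0 V0 W0.
have [n [xn [yn Uu]]] := span_near oU U0.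
have [m [xn' [yn' Vv]]] := span_near oV V0.
have [ru [ru0 hU]] := open_nr oU Uu.
have [rv [rv0 hV]] := open_nr oV Vv.
have [rw [rw0 hW]] := open_nr oW W0.
have [d1 [d10 hd1]] := sumcont htens n xn yn ru0.
have [d2 [d20 hd2]] := sumcont htens n (fun _ => 0 : X) (fun _ => 0 : Y) rw0.
have [d3 [d30 hd3]] := sumcont htens m xn' yn' rv0.
have [d4 [d40 hd4]] := sumcont htens m (fun _ => 0 : X) (fun _ => 0 : Y) rw0.
have [a [j [j0 hj]]] := orbit hT hcT n xn d10.
have [b [i [i0 hi]]] := orbit hS hcS n yn d10.
have [c [j' [j'0 hj']]] := orbit hT hcT m xn' d30.
have [d [i' [i'0 hi']]] := orbit hS hcS m yn' d30.
exists [set p | forall k, (k < n)%N -> nr (T (j k) p - xn k) < d1],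
  [set p | forall k, (k < m)%N -> nr (T (j' k) p - xn' k) < d3],
  ([set p | forall k, (k < n)%N -> nr (T (j k) p - 0) < d2] `&`
   [set p | forall k, (k < m)%N -> nr (T (j' k) p - 0) < d4]),
  [set p | forall k, (k < n)%N -> nr (S (i k) p - yn k) < d1],
  [set p | forall k, (k < m)%N -> nr (S (i' k) p - yn' k) < d3],
  ([set p | forall k, (k < n)%N -> nr (S (i k) p - 0) < d2] `&`
   [set p | forall k, (k < m)%N -> nr (S (i' k) p - 0) < d4]).
split; [|split].
- split; first exact: openfin (fun k => Tcont hT (j0 k)).
  split; first exact: openfin (fun k => Tcont hT (j'0 k)).
  split; first by apply: openI; apply: openfin => k; apply: Tcont.
  split; first by exists a.
  split; first by exists c.
  by split => k _; rewrite (semi0 hT) // subrr nr0.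
- split; first exact: openfin (fun k => Tcont hS (i0 k)).
  split; first exact: openfin (fun k => Tcont hS (i'0 k)).
  split; first by apply: openI; apply: openfin => k; apply: Tcont.
  split; first by exists b.
  split; first by exists d.
  by split => k _; rewrite (semi0 hS) // subrr nr0.
move=> s s0 [[_ [[a' Aa' <-] [WXa1 WXa2]]] [_ [[c' [WXc1 WXc2] <-] Cc]]]
  [[_ [[b' Bb' <-] [WYb1 WYb2]]] [_ [[d' [WYd1 WYd2] <-] Dd]]].
split.
- exists (TS s (\sum_(k < n) tens (T (j k) a') (S (i k) b'))); split.
    exists (\sum_(k < n) tens (T (j k) a') (S (i k) b')) => //.
    by apply: hU; rewrite nrB; apply: (hd1 (fun k => T (j k) a') (fun k => S (i k) b')) => k kn; split; [apply: Aa'|apply: Bb'].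
  rewrite (@TS_sum s n (fun=> a') (fun=> b') j i) //.
  apply: hW; rewrite nrB.
  have := hd2 (fun k => T (j k) (T s a')) (fun k => S (i k) (S s b')).
  by rewrite sum00 => -> // k kn; split; [apply: WXa1|apply: WYb1].
- exists (TS s (\sum_(k < m) tens (T (j' k) c') (S (i' k) d'))); split.
    exists (\sum_(k < m) tens (T (j' k) c') (S (i' k) d')) => //.
    apply: hW; rewrite nrB.
    have := hd4 (fun k => T (j' k) c') (fun k => S (i' k) d').
    by rewrite sum00 => -> // k kn; split; [apply: WXc2|apply: WYd2].
  rewrite (@TS_sum s m (fun=> c') (fun=> d') j' i') //.
  by apply: hV; rewrite nrB; apply: (hd3 (fun k => T (j' k) (T s c')) (fun k => S (i' k) (S s d'))) => k kn; split; [apply: Cc|apply: Dd].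
Qed.

End P4.

Section P5.
Variable R : realType.

Lemma baire (X : completeNormedModType R[i]) (F : nat -> set X) :
  (forall k, closed (F k)) -> (forall x, exists k, F k x) ->
  exists k x0 (r : R), 0 < r /\ forall y, nr (x0 - y) < r -> F k y.
Proof.
move=> Fc Fcov; apply: contrapT => H.
have H' : forall k x0 (r : R), 0 < r -> exists y, nr (x0 - y) < r /\ ~ F k y.
  move=> k x0 r r0; apply: contrapT => h; apply: H; exists k, x0, r; split => // y hy.
  by apply: contrapT => nF; apply: h; exists y.
have step : forall p : nat * (X * R), exists q : X * R, 0 < p.2.2 ->
   [/\ 0 < q.2, q.2 <= (p.1.+2%:R)^-1 & forall z, nr (q.1 - z) < 2 * q.2 ->
      nr (p.2.1 - z) < p.2.2 /\ ~ F p.1 z].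
  move=> [k [x r]] /=; have [r0|r0] := lerP r 0.
    by exists (x, r) => /= h; lra.
  have [y [hy nFy]] := H' k x r r0.
  have [e [e0 he]] := open_nr (closed_openC (Fc k)) nFy.
  pose r' := Num.min (Num.min (e / 2) ((r - nr (x - y)) / 2)) (k.+2%:R)^-1.
  have k0 : 0 < (k.+2%:R : R)^-1 by rewrite invr_gt0 ltr0n.
  have r'0 : 0 < r' by rewrite !lt_min k0 andbT; apply/andP; split; lra.
  have r'1 : r' <= e / 2 by rewrite /r' !ge_min lexx.
  have r'2 : r' <= (r - nr (x - y)) / 2 by rewrite /r' !ge_min lexx orbT.
  exists (y, r'); split => //=; first by rewrite /r' ge_min lexx orbT.
  move=> z hz; split; last by apply: he; lra.
  have := nrD (x - y) (y - z); rewrite addrA subrK; lra.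
have [f hf] := choice step.
pose fix sq n := if n is p.+1 then f (p, sq p) else ((0 : X), (1 : R)).
pose x_ n := (sq n).1; pose r_ n := (sq n).2.
have pos : forall n, 0 < r_ n.
  elim=> [|n IH]; first by rewrite /r_ /= ltr01.
  by have [] := hf (n, sq n) IH.
have stp : forall n, [/\ 0 < r_ n.+1, r_ n.+1 <= (n.+2%:R)^-1 &
    forall z, nr (x_ n.+1 - z) < 2 * r_ n.+1 -> nr (x_ n - z) < r_ n /\ ~ F n z].
  by move=> n; apply: (hf (n, sq n)); apply: pos.
have nest : forall n m, (n <= m)%N -> forall z, nr (x_ m - z) < r_ m -> nr (x_ n - z) < r_ n.
  move=> n; elim=> [|m IH]; first by rewrite leqn0 => /eqP ->.
  rewrite leq_eqVlt => /orP [/eqP -> //|]; rewrite ltnS => nm z hz.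
  apply: IH => //; have [p1 _ p3] := stp m.
  have h : nr (x_ m.+1 - z) < 2 * r_ m.+1 by lra.
  exact: (p3 z h).1.
have small : forall e : R, 0 < e -> exists N, r_ N < e.
  move=> e e0; exists (Num.truncn e^-1).+1.
  have [_ h _] := stp (Num.truncn e^-1).
  apply: (le_lt_trans h); rewrite -ltf_pV2 ?posrE ?invr_gt0 ?ltr0n // invrK.
  apply: (lt_le_trans (truncnS_gt _)); by rewrite ler_nat.
have cx : cvg (x_ @ \oo).
  apply: cauchy_cvg; apply: cauchy_exP => eps eps0.
  have er : eps \is Num.real by apply: gtr0_real.
  have [N hN] : exists N, r_ N < complex.Re eps by apply: small; rewrite -ltr0c RRe_real.
  exists (x_ N); exists N => // m /= Nm.
  rewrite -(RRe_real er) ball_nr.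
  have := nest N m Nm (x_ m); rewrite subrr nr0 => /(_ (pos m)); lra.
set l := lim (x_ @ \oo).
have hl : x_ @ \oo --> l by exact: cx.
have nF : forall n, ~ F n l.
  move=> n; have [p1 _ p3] := stp n.
  suff h : nr (x_ n.+1 - l) < 2 * r_ n.+1 by exact: (p3 l h).2.
  have := (cvgrPdist_lt _ _).1 hl (r_ n.+1)%:C; rewrite ltr0c => /(_ _ p1) [N _ hN].
  have := hN (maxn N n.+1) (leq_maxl _ _); rewrite /= nrE ltcR => h1.
  have := nest n.+1 (maxn N n.+1) (leq_maxr _ _) (x_ (maxn N n.+1)).
  rewrite subrr nr0 => /(_ (pos _)) h2.
  have := nrD (x_ n.+1 - x_ (maxn N n.+1)) (x_ (maxn N n.+1) - l).
  rewrite addrA subrK (nrB (x_ _) l); rewrite nrB in h1; lra.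
by have [k Fk] := Fcov l; apply: (nF k).
Qed.

Lemma cpt_bnd (X : normedModType R[i]) (A : set X) : compact A ->
  exists K : R, forall p, A p -> nr p <= K.
Proof.
rewrite compact_cover => Aco.
have covA : A `<=` \bigcup_(n : nat) [set p | nr p < n%:R].
  by move=> p _; exists (Num.truncn (nr p)).+1; rewrite //= truncnS_gt.
have /Aco [] := covA.
  move=> n _; have := open_nr_ball (0 : X) n%:R.
  by congr open; apply/seteqP; split => p /=; rewrite sub0r nrN.
move=> D _ DcovA.
exists (\big[Order.max/0]_(i <- finmap.enum_fset D) (i%:R : R)).
move=> p /DcovA [n Dn /= hn]; apply/ltW/(lt_le_trans hn).
have : n \in finmap.enum_fset D by [].
by move=> nD; apply: (@le_bigmax_seq _ _ _ _ _ _ xpredT (fun i : nat => (i%:R : R))).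
Qed.

Lemma ptw (X : normedModType R[i]) (T : R -> X -> X) : C0_semigroup T ->
  forall L x, exists K : R, forall t, 0 <= t -> t <= L -> nr (T t x) <= K.
Proof.
move=> hT L x.
have hc : {within [set t : R | 0 <= t], continuous (fun t => T t x)} by case: hT.
have hc' : {within `[0, L], continuous (fun t => T t x)}.
  apply: continuous_subspaceW hc => t /=; rewrite in_itv /= => /andP [] //.
have [K hK] := cpt_bnd (continuous_compact hc' (@segment_compact R 0 L)).
by exists K => t t0 tL; apply: hK; exists t => //=; rewrite in_itv /= t0 tL.
Qed.

Lemma ubp (X : completeNormedModType R[i]) (T : R -> X -> X) : C0_semigroup T ->
  forall L, exists M : R, 0 < M /\ forall t x, 0 <= t -> t <= L -> nr (T t x) <= M * nr x.
Proof.
move=> hT L.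
pose F k := [set x : X | forall t, 0 <= t -> t <= L -> nr (T t x) <= k%:R].
have Fc : forall k, closed (F k).
  move=> k; have -> : F k = \bigcap_(t in [set t | 0 <= t /\ t <= L]) [set x | nr (T t x) <= k%:R].
    apply/seteqP; split => x /= h.
      by move=> t [t0 tL]; exact: h.
    by move=> t t0 tL; exact: (h t (conj t0 tL)).
  apply: closed_bigI => t [t0 _].
  have -> : [set x | nr (T t x) <= k%:R] = ~` [set x | k%:R < nr (T t x)].
    apply/seteqP; split => x /=; first by move=> h h'; lra.
    by move=> h; rewrite leNgt; apply/negP.
  rewrite closedC; apply: nr_open => x /= hx.
  have d0 : 0 < nr (T t x) - k%:R by lra.
  have hcx : continuous (T t) by apply: Tcont.
  have [d [dd hd]] := cont_nr (hcx x) d0.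
  exists d; split => // y /hd h; have := nrD (T t x - T t y) (T t y); rewrite subrK; lra.
have cov : forall x, exists k, F k x.
  move=> x; have [K hK] := ptw hT L x; exists (Num.truncn K).+1 => t t0 tL.
  by apply: (le_trans (hK t t0 tL)); apply/ltW/truncnS_gt.
have [k [x0 [r [r0 hr]]]] := baire Fc cov.
pose M := 4 * k%:R / r + 1.
have M1 : 0 <= 4 * k%:R / r by rewrite divr_ge0 ?mulr_ge0 ?ler0n // ltW.
have M0 : 0 < M by rewrite /M; lra.
exists M; split => // t x t0 tL.
have hop := semi_op hT t0.
case: (lerP (nr x) 0) => hx.
  have -> : x = 0 by apply: nr_eq0; have := nr_ge0 x; lra.
  by rewrite (semi0 hT t0) nr0 mulr0.
pose c := r / (2 * nr x).
have nx2 : 2 * nr x != 0 by rewrite mulf_neq0 // ?pnatr_eq0 // gt_eqF.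
have c0 : 0 < c by rewrite divr_gt0 // mulr_gt0 // ltr0n.
have hc2 : c * (2 * nr x) = r by rewrite /c divfK.
pose y := c%:C *: x.
have ny : nr y = c * nr x by rewrite /y nrZ ger0_norm // ltW.
have Fy : F k (x0 + y).
  by apply: hr; rewrite opprD addrA subrr add0r nrN ny; nra.
have Fx0 : F k x0 by apply: hr; rewrite subrr nr0.
have Ty : T t y = T t (x0 + y) - T t x0.
  by rewrite (lin_add hop) addrAC subrr add0r.
have hTy : nr (T t y) <= 2 * k%:R.
  rewrite Ty; have := nrD (T t (x0 + y)) (- T t x0); rewrite nrN.
  have := Fy t t0 tL; have := Fx0 t t0 tL; lra.
have hTy' : nr (T t y) = c * nr (T t x) by rewrite /y (linZ hop) nrZ ger0_norm // ltW.
have := nr_ge0 (T t x) => hN.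
have h1 : r * nr (T t x) <= 4 * k%:R * nr x by nra.
have h2 : nr (T t x) <= 4 * k%:R * nr x / r by rewrite ler_pdivlMr // mulrC.
rewrite /M mulrDl mul1r mulrAC; lra.
Qed.

Lemma ubp_eps (X : completeNormedModType R[i]) (T : R -> X -> X) : C0_semigroup T ->
  forall L (e : R), 0 < e -> exists d : R, 0 < d /\ forall t x, 0 <= t -> t <= L ->
  nr x < d -> nr (T t x) < e.
Proof.
move=> hT L e e0; have [M [M0 hM]] := ubp hT L.
exists (e / M); split; first by rewrite divr_gt0.
move=> t x t0 tL hx; apply: (le_lt_trans (hM t x t0 tL)).
by rewrite -ltr_pdivlMl // mulrC.
Qed.

End P5.

Section P6.
Variable R : realType.
Variables (X : completeNormedModType R[i]) (T : R -> X -> X).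
Hypotheses (hT : C0_semigroup T) (hc : hc_criterion T).

Lemma semi_law s t x : 0 <= s -> 0 <= t -> T (s + t) x = T s (T t x).
Proof. by case: hT => _ _ hs _; apply: hs. Qed.

Lemma dense_rng L (V : set X) : 0 <= L -> open V -> V !=set0 -> exists e, V (T L e).
Proof.
move=> L0 oV [v Vv].
case: (lerP (nr v) 0) => hv.
  have v0 : v = 0 by apply: nr_eq0; have := nr_ge0 v; lra.
  by exists 0; rewrite (semi0 hT L0) -v0.
have [r [r0 hr]] := open_nr oV Vv.
pose rho := Num.min r (nr v / 2).
have rho0 : 0 < rho by rewrite lt_min r0 /=; lra.
have rho1 : rho <= r by rewrite ge_min lexx.
have rho2 : rho <= nr v / 2 by rewrite ge_min lexx orbT.
have v2 : 0 < nr v / 2 by lra.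
have [d [d0 hd]] := ubp_eps hT L v2.
have := hc openT (open_nr_ball v rho) (open_nr_ball 0 d).
case.
- by exists 0.
- by exists v; rewrite /= subrr nr0.
- by rewrite /= subrr nr0.
move=> t [t0 [_ [_ [[w /= hw <-] hTw]]]].
rewrite sub0r nrN in hw.
case: (lerP t L) => tL.
  have := hd t w (ltW t0) tL hw; have := nrD (v - T t w) (T t w); rewrite subrK; lra.
exists (T (t - L) w); rewrite -semi_law ?subr_ge0 ?(ltW tL) // addrC subrK.
by apply: hr; lra.
Qed.

Lemma thick (B D W : set X) L : open B -> open D -> open W -> B !=set0 -> D !=set0 -> W 0 ->
  0 <= L -> exists D' W', open D' /\ open W' /\ D' !=set0 /\ W' 0 /\
  forall t', 0 <= t' -> Mi T B W' D' t' -> forall tau, 0 <= tau -> tau <= L ->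
    Mi T B W D (t' + tau).
Proof.
move=> oB oD oW B0 D0 W0 L0.
have [e [e0 he]] := open_nr oW W0.
have [d [d0 hd]] := ubp_eps hT L e0.
exists (T L @^-1` D), [set y | nr (0 - y) < d]; split.
  by apply: open_comp => // x _; apply: Tcont.
split; first exact: open_nr_ball.
split; first exact: dense_rng.
split; first by rewrite /= subrr nr0.
move=> t' t'0 [[_ [[b Bb <-] Wb]] [_ [[w Ww <-] Dw]]] tau tau0 tauL.
rewrite /= sub0r nrN in Wb.
rewrite /= sub0r nrN in Ww.
split.
- exists (T (t' + tau) b); split; first by exists b.
  apply: he; rewrite sub0r nrN addrC semi_law //.
  by apply: hd.
- exists (T (t' + tau) (T (L - tau) w)); split.
    exists (T (L - tau) w) => //; apply: he; rewrite sub0r nrN.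
    by apply: hd => //; lra.
  have -> : T (t' + tau) (T (L - tau) w) = T L (T t' w).
    have h1 : T (t' + tau + (L - tau)) w = T (t' + tau) (T (L - tau) w).
      by apply: semi_law; lra.
    have h2 : T (L + t') w = T L (T t' w) by apply: semi_law.
    by rewrite -h1 -h2; congr T; lra.
  exact: Dw.
Qed.

End P6.

Lemma rec_hc (R : realType) (V : normedModType R[i]) (T : R -> V -> V) :
  recurrent_hc_criterion T -> hc_criterion T.
Proof.
move=> h U W0 W oU oV oW U0 V0 W00.
have [L [L0 hL]] := h U W0 W oU oV oW U0 V0 W00.
have [s [/andP [s1 _] hs]] := hL 1 ler01.
by exists s; split => //; apply: lt_le_trans s1.
Qed.

Unset Implicit Arguments.

Theorem theorem2p1 (R : realType) (X Y Z : completeNormedModType R[i])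
    (T : R -> X -> X) (S : R -> Y -> Y) (tens : X -> Y -> Z) (TS : R -> Z -> Z) :
  C0_semigroup T -> C0_semigroup S ->
  recurrent_hc_criterion T ->
  uniform_crossnorm_completion tens ->
  (forall t, 0 <= t -> bounded_op (TS t) /\
     forall x y, TS t (tens x y) = tens (T t x) (S t y)) ->
  (hc_criterion S -> hc_criterion TS) /\
  (recurrent_hc_criterion S -> recurrent_hc_criterion TS).
Proof.
move=> hT hS hrT htens hTS.
have hcT := rec_hc hrT.
split.
- move=> hcS U V W oU oV oW U0 V0 W0.
  have [A [C [WX [B [D [WY [[oA [oC [oWX [A0 [C0 WX0]]]]] [[oB [oD [oWY [B0 [D0 WY0]]]]] hZ]]]]]]]] :=
    zlemma hT hS hcT hcS htens hTS oU oV oW U0 V0 W0.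
  have [L [L0 hL]] := hrT A C WX oA oC oWX A0 C0 WX0.
  have [D' [W' [oD' [oW' [D'0 [W'0 hth]]]]]] := thick hS hcS oB oD oWY B0 D0 WY0 L0.
  have [t' [t'0 hMt']] := hcS B D' W' oB oD' oW' B0 D'0 W'0.
  have [s [/andP [ts sL] hMs]] := hL t' (ltW t'0).
  have s0 : 0 < s by apply: lt_le_trans ts.
  exists s; split => //; apply: hZ (ltW s0) hMs _.
  have e : t' + (s - t') = s by rewrite addrC subrK.
  have := hth t' (ltW t'0) hMt' (s - t'); rewrite e; apply; lra.
- move=> hrS U V W oU oV oW U0 V0 W0.
  have hcS := rec_hc hrS.
  have [A [C [WX [B [D [WY [[oA [oC [oWX [A0 [C0 WX0]]]]] [[oB [oD [oWY [B0 [D0 WY0]]]]] hZ]]]]]]]] :=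
    zlemma hT hS hcT hcS htens hTS oU oV oW U0 V0 W0.
  have [L [L0 hL]] := hrT A C WX oA oC oWX A0 C0 WX0.
  have [D' [W' [oD' [oW' [D'0 [W'0 hth]]]]]] := thick hS hcS oB oD oWY B0 D0 WY0 L0.
  have [L' [L'0 hL']] := hrS B D' W' oB oD' oW' B0 D'0 W'0.
  exists (L' + L); split; first lra.
  move=> t0 ht0.
  have [t' [/andP [t1 t2] hMt']] := hL' t0 ht0.
  have t'0 : 0 <= t' by lra.
  have [s [/andP [ts sL] hMs]] := hL t' t'0.
  exists s; split; first by apply/andP; split; lra.
  apply: hZ hMs _; first lra.
  have e : t' + (s - t') = s by rewrite addrC subrK.
  have := hth t' t'0 hMt' (s - t'); rewrite e; apply; lra.
Qed.
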